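(* For every integer $n\ge1$, $$\log_2(n+1)\le \kappa(n)\le \lceil \log_2(n+1)\rceil .$$ In particular $\kappa(n)=\log_2(n+1)$ whenever $n+1$ is a power of $2$.
   Context: $\Delta_n=\{t=(t_i)_{i=1}^{n+1}: t_i\ge0,\ \sum t_i=1\}$ is the standard $n$-simplex with vertices $e_1,\dots,e_{n+1}$. A function $f:C\to\mathbb{R}$ on a convex set $C$ is approximately convex if $f(tx+(1-t)y)\le tf(x)+(1-t)f(y)+1$ for all $x,y\in C$, $t\in[0,1]$. Let $\mathcal{F}_n$ be the set of all approximately convex $f:\Delta_n\to\mathbb{R}$ with $f(e_i)\le 0$ for $1\le i\le n+1$, and $\kappa(n)=\sup_{f\in\mathcal{F}_n}\sup_{x\in\Delta_n}f(x)$. $\lceil x\rceil$ denotes the least integer $\ge x$. *)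

(* Defs.v *)
From Stdlib Require Import Reals Lra.
From Coquelicot Require Import Coquelicot.
Open Scope R_scope.

(* Points of R^{n+1} are represented as t : nat -> R with coordinates
   t 0, ..., t n (coordinate i+1 of the paper is t i); coordinates
   beyond n are required to be 0 so that points of the simplex are
   uniquely represented. *)
Definition simplex (n : nat) (t : nat -> R) : Prop :=
  (forall i, (i <= n)%nat -> 0 <= t i) /\
  (forall i, (n < i)%nat -> t i = 0) /\
  sum_f_R0 t n = 1.

Definition vertex (i : nat) : nat -> R :=
  fun j => if Nat.eq_dec j i then 1 else 0.

Definition comb (s : R) (x y : nat -> R) : nat -> R :=
  fun i => s * x i + (1 - s) * y i.

Definition approx_convex (n : nat) (f : (nat -> R) -> R) : Prop :=
  forall x y s, simplex n x -> simplex n y -> 0 <= s <= 1 ->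
    f (comb s x y) <= s * f x + (1 - s) * f y + 1.

Definition F_class (n : nat) (f : (nat -> R) -> R) : Prop :=
  approx_convex n f /\ (forall i, (i <= n)%nat -> f (vertex i) <= 0).

Definition kappa (n : nat) : Rbar :=
  Lub_Rbar (fun y => exists f x, F_class n f /\ simplex n x /\ y = f x).

Definition log2 (x : R) : R := ln x / ln 2.

Definition ceil (x : R) : Z := (- Int_part (- x))%Z.

(* Main.v *)
Require Import Defs.
From Stdlib Require Import Reals Lra Lia Arith ZArith FunctionalExtensionality.
From Coquelicot Require Import Coquelicot.
Open Scope R_scope.

Lemma sum_zero u N : (forall i, (i <= N)%nat -> u i = 0) -> sum_f_R0 u N = 0.
Proof.
  intro h. induction N; simpl. apply h; lia.
  rewrite IHN by (intros; apply h; lia). rewrite h by lia. ring.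
Qed.

Lemma sum_nonneg u N : (forall i, (i <= N)%nat -> 0 <= u i) -> 0 <= sum_f_R0 u N.
Proof.
  intro h. induction N; simpl. apply h; lia.
  assert (0 <= sum_f_R0 u N) by (apply IHN; intros; apply h; lia).
  generalize (h (S N) (le_n _)). lra.
Qed.

Lemma sum_nonneg_zero u N : (forall i, (i <= N)%nat -> 0 <= u i) -> sum_f_R0 u N = 0 ->
  forall i, (i <= N)%nat -> u i = 0.
Proof.
  intros h. induction N; simpl; intros hs i hi.
  - replace i with 0%nat by lia. exact hs.
  - assert (0 <= sum_f_R0 u N) by (apply sum_nonneg; intros; apply h; lia).
    generalize (h (S N) (le_n _)); intro.
    destruct (Nat.eq_dec i (S N)) as [->|ne]. lra.
    apply IHN. intros; apply h; lia. lra. lia.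
Qed.

Lemma sum_single u N a : (a <= N)%nat -> (forall i, (i <= N)%nat -> i <> a -> u i = 0) ->
  sum_f_R0 u N = u a.
Proof.
  intros ha h. induction N; simpl.
  - replace a with 0%nat by lia. reflexivity.
  - destruct (Nat.eq_dec a (S N)) as [->|ne].
    + rewrite sum_zero. ring. intros; apply h; lia.
    + rewrite IHN by (try lia; intros; apply h; lia). rewrite (h (S N)) by lia. ring.
Qed.

Lemma key n f (Hf : F_class n f) : forall k a m x, (1 <= m <= 2^k)%nat -> simplex n x ->
  (forall i, (i < a \/ a+m <= i)%nat -> x i = 0) -> f x <= INR k.
Proof.
  destruct Hf as [Hc Hv].
  induction k; intros a m x hm hx hs.
  - simpl in hm. assert (m = 1%nat) by lia. subst m.
    destruct hx as [h0 [h1 h2]]. destruct (le_lt_dec a n) as [la|la].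
    + assert (xa : x a = 1).
      { rewrite (sum_single x n a) in h2 by (auto; intros; apply hs; lia). exact h2. }
      replace x with (vertex a).
      { simpl. apply Hv; auto. }
      apply functional_extensionality; intro j. unfold vertex.
      destruct Nat.eq_dec as [->|ne]. auto. symmetry; apply hs; lia.
    + rewrite sum_zero in h2. lra. intros; apply hs; lia.
  - rewrite S_INR.
    assert (hk : 0 <= INR k) by apply pos_INR.
    destruct (le_lt_dec m (2^k)) as [lm|lm].
    { assert (f x <= INR k) by (eapply IHk; eauto; lia). lra. }
    assert (e2 : (2^(S k) = 2^k + 2^k)%nat) by (simpl; lia).
    rewrite e2 in hm. remember (2^k)%nat as P.
    set (p := (a + P)%nat).
    set (g := fun i => if Nat.ltb i p then x i else 0).
    set (h := fun i => if Nat.ltb i p then 0 else x i).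
    destruct hx as [h0 [h1 h2]].
    assert (gh : forall i, g i + h i = x i).
    { intro i; unfold g, h; destruct Nat.ltb; ring. }
    assert (g0 : forall i, (i <= n)%nat -> 0 <= g i).
    { intros i hi; unfold g; destruct Nat.ltb; [apply h0; auto | lra]. }
    assert (h0' : forall i, (i <= n)%nat -> 0 <= h i).
    { intros i hi; unfold h; destruct Nat.ltb; [lra | apply h0; auto]. }
    set (s := sum_f_R0 g n).
    set (t := sum_f_R0 h n).
    assert (st : s + t = 1).
    { unfold s, t. rewrite <- plus_sum. rewrite <- h2. apply sum_eq. intros; apply gh. }
    assert (s0 : 0 <= s) by (apply sum_nonneg; auto).
    assert (t0 : 0 <= t) by (apply sum_nonneg; auto).
    assert (gn : forall i, (n < i)%nat -> g i = 0).
    { intros i hi; unfold g; rewrite h1 by auto; destruct Nat.ltb; auto. }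
    assert (hn : forall i, (n < i)%nat -> h i = 0).
    { intros i hi; unfold h; rewrite h1 by auto; destruct Nat.ltb; auto. }
    destruct (Req_dec s 0) as [es|es].
    { assert (f x <= INR k); [|lra].
      apply (IHk p (m - P)%nat x); [lia | split; auto |].
      intros i hi. destruct (Nat.ltb_spec i p) as [lp|lp].
      - destruct (le_lt_dec i n) as [li|li]; [|auto].
        rewrite <- (sum_nonneg_zero g n g0 es i li). unfold g. 
        apply Nat.ltb_lt in lp; rewrite lp; auto.
      - apply hs. lia. }
    destruct (Req_dec t 0) as [et|et].
    { assert (f x <= INR k); [|lra].
      apply (IHk a P x); [lia | split; auto |].
      intros i hi. destruct hi as [hi|hi]. apply hs; lia.
      destruct (le_lt_dec i n) as [li|li]; [|auto].
      rewrite <- (sum_nonneg_zero h n h0' et i li). unfold h.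
      assert (Nat.ltb i p = false) by (apply Nat.ltb_ge; unfold p; lia).
      rewrite H; auto. }
    assert (sp : 0 < s) by lra. assert (tp : 0 < t) by lra.
    set (y := fun i => g i * / s).
    set (z := fun i => h i * / t).
    assert (xe : x = comb s y z).
    { apply functional_extensionality; intro i. unfold comb, y, z.
      replace (1 - s) with t by lra. rewrite <- gh. field. lra. }
    assert (sy : simplex n y).
    { split; [|split].
      - intros i hi. unfold y. apply Rmult_le_pos; [auto | left; apply Rinv_0_lt_compat; lra].
      - intros i hi. unfold y. rewrite gn by auto. ring.
      - unfold y. rewrite <- scal_sum. fold s. field. lra. }
    assert (sz : simplex n z).
    { split; [|split].
      - intros i hi. unfold z. apply Rmult_le_pos; [auto | left; apply Rinv_0_lt_compat; lra].
      - intros i hi. unfold z. rewrite hn by auto. ring.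
      - unfold z. rewrite <- scal_sum. fold t. field. lra. }
    assert (fy : f y <= INR k).
    { apply (IHk a P y); [lia | auto |].
      intros i hi. unfold y, g. destruct hi as [hi|hi].
      - rewrite hs by lia. destruct Nat.ltb; ring.
      - assert (Nat.ltb i p = false) by (apply Nat.ltb_ge; unfold p; lia).
        rewrite H; ring. }
    assert (fz : f z <= INR k).
    { apply (IHk p (m - P)%nat z); [lia | auto |].
      intros i hi. unfold z, h. destruct (Nat.ltb_spec i p) as [lp|lp].
      - ring.
      - rewrite hs by lia. ring. }
    rewrite xe. eapply Rle_trans. apply Hc; auto; lra.
    assert (s * f y <= s * INR k) by (apply Rmult_le_compat_l; lra).
    assert ((1-s) * f z <= (1-s) * INR k) by (apply Rmult_le_compat_l; lra).
    lra.
Qed.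
Lemma ln0 : ln 0 = 0. Proof. unfold ln. case Rlt_dec; intro h; [destruct (Rlt_irrefl _ h) | reflexivity]. Qed.

Lemma ln_le_sub1 x : 0 < x -> ln x <= x - 1.
Proof. intro h. generalize (exp_ineq1_le (ln x)). rewrite exp_ln; lra. Qed.

Lemma ln2_pos : 0 < ln 2.
Proof. generalize ln_lt_2; lra. Qed.

Lemma xlnx_mul a b : 0 <= a -> 0 <= b -> (a*b)*ln(a*b) = b*(a*ln a) + a*(b*ln b).
Proof.
  intros ha hb. destruct (Req_dec a 0) as [->|ha'].
  { rewrite Rmult_0_l. ring. }
  destruct (Req_dec b 0) as [->|hb'].
  { rewrite Rmult_0_r. ring. }
  rewrite ln_mult by lra. ring.
Qed.

Lemma xlnx_sub u v : 0 <= u -> 0 <= v -> u*ln u + v * ln v <= (u+v)*ln(u+v).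
Proof.
  intros hu hv. destruct (Req_dec u 0) as [->|hu'].
  { rewrite Rplus_0_l, ln0. lra. }
  destruct (Req_dec v 0) as [->|hv'].
  { rewrite Rplus_0_r, ln0. lra. }
  assert (ln u <= ln (u+v)) by (apply ln_le; lra).
  assert (ln v <= ln (u+v)) by (apply ln_le; lra).
  assert (u * ln u <= u * ln (u+v)) by (apply Rmult_le_compat_l; lra).
  assert (v * ln v <= v * ln (u+v)) by (apply Rmult_le_compat_l; lra).
  lra.
Qed.

Lemma half_bound s : 0 < s -> -(s * ln s) <= s * ln 2 + /2 - s.
Proof.
  intro hs. assert (h := ln_le_sub1 (/(2*s)) ltac:(apply Rinv_0_lt_compat; lra)).
  rewrite ln_Rinv, ln_mult in h by lra.
  assert (s * (- (ln 2 + ln s)) <= s * (/(2*s) - 1)) by (apply Rmult_le_compat_l; lra).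
  assert (s * /(2*s) = /2) by (field; lra).
  lra.
Qed.

Lemma binent s : 0 <= s <= 1 -> -(s*ln s) - ((1-s)*ln(1-s)) <= ln 2.
Proof.
  intro hs. generalize ln2_pos; intro hl.
  destruct (Req_dec s 0) as [->|h0].
  { rewrite Rminus_0_r, ln_1. lra. }
  destruct (Req_dec s 1) as [->|h1].
  { replace (1-1) with 0 by ring. rewrite ln0, ln_1. lra. }
  generalize (half_bound s ltac:(lra)) (half_bound (1-s) ltac:(lra)). lra.
Qed.

Lemma sum_lin4 a b c d p q r w N :
  sum_f_R0 (fun i => a*p i + b*q i + c*r i + d*w i) N =
  a*sum_f_R0 p N + b*sum_f_R0 q N + c*sum_f_R0 r N + d*sum_f_R0 w N.
Proof. induction N; simpl; [ring | rewrite IHN; ring]. Qed.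

Definition ent (n : nat) (x : nat -> R) : R :=
  - sum_f_R0 (fun i => x i * ln (x i)) n / ln 2.

Lemma ent_approx n : approx_convex n (ent n).
Proof.
  intros x y s [hx0 [_ hx1]] [hy0 [_ hy1]] hs. unfold ent.
  set (A := sum_f_R0 _ n).
  set (X := sum_f_R0 (fun i => x i * ln (x i)) n).
  set (Y := sum_f_R0 (fun i => y i * ln (y i)) n).
  assert (key : -A <= -(s*X) - ((1-s)*Y) + ln 2).
  { assert (A >= (s*ln s)*sum_f_R0 x n + s*X + ((1-s)*ln(1-s))*sum_f_R0 y n + (1-s)*Y).
    { unfold X, Y. rewrite <- (sum_lin4 (s*ln s) s ((1-s)*ln(1-s)) (1-s) x (fun i => x i * ln (x i)) y (fun i => y i * ln (y i)) n). unfold A. apply Rle_ge, sum_Rle. intros i hi.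
      unfold comb. generalize (hx0 i hi) (hy0 i hi); intros a b.
      replace (s*ln s*x i + s*(x i*ln(x i)) + ((1-s)*ln(1-s))*y i + (1-s)*(y i*ln(y i)))
        with ((s*x i)*ln(s*x i) + ((1-s)*y i)*ln((1-s)*y i)).
      2: rewrite (xlnx_mul s (x i)), (xlnx_mul (1-s) (y i)) by lra; ring.
      apply xlnx_sub; apply Rmult_le_pos; lra. }
    rewrite hx1, hy1 in H. generalize (binent s hs). lra. }
  generalize ln2_pos; intro hl.
  replace (s * (- X / ln 2) + (1 - s) * (- Y / ln 2) + 1)
    with ((-(s*X) - ((1-s)*Y) + ln 2) * / ln 2) by (field; lra).
  unfold Rdiv. apply Rmult_le_compat_r; [left; apply Rinv_0_lt_compat; lra | lra].
Qed.

Lemma ent_vertex n i : ent n (vertex i) = 0.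
Proof.
  unfold ent. rewrite sum_zero. unfold Rdiv; ring.
  intros j _. unfold vertex. destruct Nat.eq_dec. rewrite ln_1; ring. rewrite ln0; ring.
Qed.

Lemma ent_F n : F_class n (ent n).
Proof. split. apply ent_approx. intros i _. rewrite ent_vertex. lra. Qed.

Definition unif (n : nat) : nat -> R := fun i => if Nat.leb i n then / (INR n + 1) else 0.

Lemma unif_simplex n : simplex n (unif n).
Proof.
  assert (hp : 0 < INR n + 1) by (generalize (pos_INR n); lra).
  unfold unif. split; [|split].
  - intros i hi. apply Nat.leb_le in hi. rewrite hi. left; apply Rinv_0_lt_compat; lra.
  - intros i hi. destruct (Nat.leb_spec i n). lia. reflexivity.
  - rewrite (sum_eq _ (fun _ => / (INR n + 1))).
    rewrite sum_cte, S_INR. field. lra.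
    intros i hi. apply Nat.leb_le in hi. rewrite hi. reflexivity.
Qed.

Lemma ent_unif n : ent n (unif n) = log2 (INR n + 1).
Proof.
  assert (hp : 0 < INR n + 1) by (generalize (pos_INR n); lra).
  unfold ent, log2.
  rewrite (sum_eq _ (fun _ => / (INR n + 1) * ln (/ (INR n + 1)))).
  rewrite sum_cte, S_INR, ln_Rinv by lra. field. split; generalize ln2_pos; lra.
  intros i hi. unfold unif. apply Nat.leb_le in hi. rewrite hi. reflexivity.
Qed.


Lemma ceil_ge L : L <= IZR (ceil L).
Proof.
  unfold ceil. destruct (base_Int_part (-L)) as [a b]. rewrite opp_IZR. lra.
Qed.

Lemma ceil_int z : ceil (IZR z) = z.
Proof.
  unfold ceil. destruct (base_Int_part (- IZR z)) as [a b].
  rewrite <- opp_IZR in a, b |- *.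
  apply le_IZR in a.
  assert (IZR (Int_part (IZR (- z))) > IZR (- z - 1)) by (rewrite minus_IZR; lra).
  apply lt_IZR in H. lia.
Qed.

Theorem mainTheorem2 (n : nat) (hn : (1 <= n)%nat) :
  Rbar_le (Finite (log2 (INR n + 1))) (kappa n) /\
  Rbar_le (kappa n) (Finite (IZR (ceil (log2 (INR n + 1))))) /\
  (forall k : nat, (n + 1 = 2 ^ k)%nat -> kappa n = Finite (log2 (INR n + 1))).
Proof.
  set (L := log2 (INR n + 1)).
  assert (hl2 := ln2_pos).
  assert (hn1 : 1 <= INR n + 1) by (generalize (pos_INR n); lra).
  assert (L0 : 0 <= L).
  { unfold L, log2. apply Rmult_le_pos.
    rewrite <- ln_1. apply ln_le; lra. left; apply Rinv_0_lt_compat; lra. }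
  assert (P1 : Rbar_le (Finite L) (kappa n)).
  { unfold kappa. destruct (Lub_Rbar_correct (fun y => exists f x, F_class n f /\ simplex n x /\ y = f x)) as [ub _].
    apply ub. exists (ent n), (unif n). split; [apply ent_F|split; [apply unif_simplex|]].
    rewrite ent_unif. reflexivity. }
  assert (P2 : Rbar_le (kappa n) (Finite (IZR (ceil L)))).
  { unfold kappa. destruct (Lub_Rbar_correct (fun y => exists f x, F_class n f /\ simplex n x /\ y = f x)) as [_ lub].
    apply lub. intros y [f [x [hf [hx ->]]]]. simpl.
    set (c := ceil L).
    assert (hc := ceil_ge L). fold c in hc.
    assert (c0 : (0 <= c)%Z) by (apply le_IZR; lra).
    assert (kc : INR (Z.to_nat c) = IZR c) by (rewrite INR_IZR_INZ, Z2Nat.id; auto).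
    rewrite <- kc.
    apply (key n f hf (Z.to_nat c) 0 (n+1) x); auto.
    - split; [lia|].
      destruct (le_lt_dec (n+1) (2 ^ Z.to_nat c)) as [h|h]; auto. exfalso.
      apply lt_INR in h. rewrite pow_INR, plus_INR in h. simpl in h.
      assert (ln (2 ^ Z.to_nat c) < ln (INR n + 1)) by (apply ln_increasing; auto; apply pow_lt; lra).
      rewrite ln_pow in H by lra.
      assert (INR (Z.to_nat c) < L).
      { apply (Rmult_lt_reg_r (ln 2)); auto. unfold L, log2. field_simplify; lra. }
      lra.
    - intros i [hi|hi]. lia. destruct hx as [_ [h1 _]]. apply h1. lia. }
  split; [exact P1|split; [exact P2|]].
  intros k hk.
  assert (LK : L = INR k).
  { unfold L, log2. replace (INR n + 1) with (INR (n+1)) by (rewrite plus_INR; simpl; ring).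
    rewrite hk, pow_INR. replace (INR 2) with 2 by (simpl; ring).
    rewrite ln_pow by lra. field. lra. }
  rewrite LK, INR_IZR_INZ, ceil_int in P2. rewrite <- INR_IZR_INZ, <- LK in P2.
  apply Rbar_le_antisym; auto.
Qed.
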